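(* Let $1\le b<\frac{n}{2}-1$ and let $T$ be a tree attaining the maximum value of $M_2$ over $\mathcal{CT}^*_{n,b}$. Then every vertex of degree $3$ in $T$ (if any) has at most one neighbor of degree $4$.
   Context: A chemical tree is a tree with maximum degree at most $4$. A branching vertex is a vertex of degree greater than $2$. $\mathcal{CT}^*_{n,b}$ is the class of all $n$-vertex chemical trees with exactly $b$ branching vertices. $M_2(G)=\sum_{uv\in E(G)}d_ud_v$, where $d_v$ is the degree of $v$. *)

(* Defs.v *)
From mathcomp Require Import all_boot.
Set Implicit Arguments. Unset Strict Implicit. Unset Printing Implicit Defensive.

Definition simple_graph (n : nat) (e : rel 'I_n) : Prop :=
  symmetric e /\ irreflexive e.

Definition deg (n : nat) (e : rel 'I_n) (v : 'I_n) : nat := #|[set u | e v u]|.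

(* edge set: unordered pairs {u,v}, represented by (u,v) with u < v *)
Definition edges (n : nat) (e : rel 'I_n) : {set 'I_n * 'I_n} :=
  [set p | e p.1 p.2 && (p.1 < p.2)%N].

Definition is_tree (n : nat) (e : rel 'I_n) : Prop :=
  simple_graph e /\ (forall u v, connect e u v) /\ #|edges e| = n.-1.

Definition chemical_tree (n : nat) (e : rel 'I_n) : Prop :=
  is_tree e /\ forall v, deg e v <= 4.

Definition nbranching (n : nat) (e : rel 'I_n) : nat :=
  #|[set v | 2 < deg e v]|.

Definition in_CT (n b : nat) (e : rel 'I_n) : Prop :=
  chemical_tree e /\ nbranching e = b.

Definition M2 (n : nat) (e : rel 'I_n) : nat :=
  \sum_(p in edges e) deg e p.1 * deg e p.2.

(* Main.v *)
Require Import Defs.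
From mathcomp Require Import all_boot zify.
Set Implicit Arguments. Unset Strict Implicit. Unset Printing Implicit Defensive.

Lemma parent_exists (T : finType) (e : rel T) (r : T) :
  (forall x, connect e x r) ->
  exists (par : T -> T) (d : T -> nat),
    par r = r /\ forall x, x != r -> e x (par x) /\ d (par x) < d x.
Proof.
move=> hc.
pose reach x k := [exists p : k.-tuple T, path e x p && (last x p == r)].
have exR : forall x, exists k, reach x k.
  move=> x; case/connectP: (hc x) => p hp hl.
  exists (size p); apply/existsP; exists (in_tuple p); rewrite /= hp -hl eqxx.
  done.
pose d x := ex_minn (exR x).
have dmin : forall x k, reach x k -> d x <= k.
  move=> x k hk; rewrite /d; case: ex_minnP => m _ hm; exact: hm.
have dspec : forall x, reach x (d x).
  move=> x; rewrite /d; case: ex_minnP => m hm _; exact: hm.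
have step : forall x, x != r -> exists z, e x z && (d z < d x).
  move=> x hx; have := dspec x; case/existsP => -[s sz] /andP [hp hl].
  move: s sz hp hl => [|z q] sz /= hp hl.
    by rewrite (eqP hl) eqxx in hx.
  case/andP: hp => hxz hq; exists z; rewrite hxz /=.
  have hr : reach z (size q) by apply/existsP; exists (in_tuple q); rewrite /= hq hl.
  have := dmin _ _ hr; move: sz => /eqP /= sz; lia.
exists (fun x => if x == r then r else odflt r [pick z | e x z && (d z < d x)]), d.
split; first by rewrite eqxx.
move=> x hx; rewrite (negbTE hx); case: pickP => [z /andP [h1 h2] | hn] //=.
case: (step x hx) => z hz; by have := hn z; rewrite hz.
Qed.

Lemma edges_lb n (e : rel 'I_n) (r : 'I_n) :
  symmetric e -> (forall x, connect e x r) -> n.-1 <= #|edges e|.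
Proof.
move=> hs hc; case: (parent_exists hc) => par [d [hr hp]].
pose f (x : 'I_n) := if (x < par x)%N then (x, par x) else (par x, x).
have hcard : #|[set x | x != r]| = n.-1.
  have -> : [set x | x != r] = [set~ r] by apply/setP => z; rewrite !inE.
  by rewrite cardsC1 card_ord.
rewrite -hcard -(card_in_imset (f := f)).
  apply: subset_leq_card; apply/subsetP => p /imsetP [x]; rewrite inE => hx ->.
  have [h1 h2] := hp x hx.
  have hne : nat_of_ord x != par x.
    apply/negP => /eqP /val_inj hxp; rewrite -hxp in h2; lia.
  rewrite /f inE; case: ifP => /= hlt; first by rewrite h1 hlt.
  by rewrite hs h1 /=; lia.
move=> x x'; rewrite !inE => hx hx'.
have [h1 h2] := hp x hx; have [h1' h2'] := hp x' hx'.
rewrite /f; case: ifP => l1; case: ifP => l2 [] e1 e2 //; try by apply: val_inj.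
- by move: h2 h2'; first [rewrite e2 e1 | rewrite e1 e2]; lia.
- by move: h2 h2'; first [rewrite e2 e1 | rewrite e1 e2]; lia.
Qed.

Definition remE n (e : rel 'I_n) a b : rel 'I_n :=
  [rel x y | e x y && ~~ (((x==a)&&(y==b)) || ((x==b)&&(y==a)))].

Lemma bridge n (e : rel 'I_n) a b :
  is_tree e -> e a b -> ~~ connect (remE e a b) a b.
Proof.
move=> [[hs hi] [hc hcard]] hab; apply/negP => hcon.
set e0 := remE e a b.
have hs0 : symmetric e0.
  move=> x y; rewrite /e0 /remE /= hs; by rewrite orbC [(y == a) && _]andbC [(y == b) && _]andbC.
have hc0 : forall x y, connect e0 x y.
  move=> x y; apply: (connect_sub (e := e)) (hc x y) => u w huw.
  case hE: (((u==a)&&(w==b)) || ((u==b)&&(w==a))).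
    case/orP: hE => /andP [/eqP -> /eqP ->] //.
    by rewrite (sym_connect_sym hs0).
  by apply: connect1; rewrite /e0 /remE /= huw hE.
have := edges_lb hs0 (fun x => hc0 x a).
have hpr : edges e0 \proper edges e.
  apply/properP; split.
    by apply/subsetP => p; rewrite !inE /e0 /remE /= => /andP [/andP [-> _] ->].
  have hne : nat_of_ord a != b.
    by apply/negP => /eqP /val_inj hab'; rewrite hab' hi in hab.
  exists (if (a < b)%N then (a, b) else (b, a)).
    rewrite inE; case: ifP => /= hl; first by rewrite hab hl.
    by rewrite hs hab /=; lia.
  rewrite inE /e0 /remE /=; case: ifP => /= _; by rewrite !eqxx ?orbT /= ?andbF.
have := proper_card hpr; rewrite hcard; lia.
Qed.

Lemma nbr n (e : rel 'I_n) (r : 'I_n) (par : 'I_n -> 'I_n) (d : 'I_n -> nat) :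
  is_tree e -> par r = r -> (forall x, x != r -> e x (par x) /\ d (par x) < d x) ->
  forall x z, e x z -> (x != r) && (par x == z) || (z != r) && (par z == x).
Proof.
move=> ht hr hp x z hxz; apply/negPn/negP => hn.
have /negP := bridge ht hxz; apply.
set e0 := remE e x z.
have hpe : forall w, w != r -> e0 w (par w).
  move=> w hw; have [h1 _] := hp w hw; rewrite /e0 /remE /= h1 /=.
  apply/negP => /orP [] /andP [/eqP ew /eqP epw]; move/negP: hn; apply; subst w.
    by rewrite hw epw eqxx.
  by rewrite hw epw eqxx orbT.
have hs0 : symmetric e0.
  by case: ht => -[hs _] _ u w; rewrite /e0 /remE /= hs orbC [(w == x) && _]andbC [(w == z) && _]andbC.
have hcr : forall w, connect e0 w r.
  move=> w; move: {2}(d w) (leqnn (d w)) => m; elim: m w => [|m ih] w hw.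
    case: (eqVneq w r) => [-> //|hwr]; have [_ h2] := hp w hwr; lia.
  case: (eqVneq w r) => [-> //|hwr]; have [_ h2] := hp w hwr.
  apply: connect_trans (connect1 (hpe w hwr)) (ih _ _); lia.
by apply: connect_trans (hcr x) _; rewrite (sym_connect_sym hs0).
Qed.

Lemma dsum n (e : rel 'I_n) (w : 'I_n -> 'I_n -> nat) :
  symmetric e -> irreflexive e -> (forall x y, w x y = w y x) ->
  \sum_x \sum_(z | e x z) w x z = 2 * \sum_(p in edges e) w p.1 p.2.
Proof.
move=> hs hi hw.
rewrite pair_big_dep /= (bigID (fun p : 'I_n * 'I_n => (p.1 < p.2)%N)) /=.
have h1 : \sum_(i | true && e i.1 i.2 && (i.1 < i.2)%N) w i.1 i.2
          = \sum_(p in edges e) w p.1 p.2.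
  by apply: eq_bigl => p; rewrite inE.
rewrite h1 [X in _ + X](reindex_inj (h := fun p : 'I_n * 'I_n => (p.2, p.1))) /=; last first.
  by move=> [a b] [c d] /= [-> ->].
rewrite mul2n -addnn; congr (_ + _).
apply: eq_big => [p|p _]; last exact: hw.
rewrite hs inE; case he: (e p.1 p.2) => //=.
have hne : nat_of_ord p.1 != p.2.
  by apply/negP => /eqP /val_inj hq; rewrite hq hi in he.
lia.
Qed.

Lemma handshake n (e : rel 'I_n) :
  symmetric e -> irreflexive e -> \sum_x deg e x = 2 * #|edges e|.
Proof.
move=> hs hi; rewrite -sum1_card -(@dsum n e (fun _ _ => 1)) //.
apply: eq_bigr => x _; rewrite /deg -sum1_card; apply: eq_bigl => z; by rewrite inE.
Qed.

Lemma M2_dsum n (e : rel 'I_n) :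
  symmetric e -> irreflexive e ->
  2 * M2 e = \sum_x \sum_(z | e x z) deg e x * deg e z.
Proof. by move=> hs hi; rewrite (@dsum n e (fun x z => deg e x * deg e z)) // => x y; rewrite mulnC. Qed.

Ltac kill_neq := repeat match goal with
 | H : is_true (?u != ?w) |- context [?u == ?w] => rewrite (negbTE H)
 | H : is_true (?u != ?w) |- context [?w == ?u] => rewrite (eq_sym w u) (negbTE H)
 end; rewrite ?eqxx /=.

Ltac split2 u w := let E := fresh "E" in case: (eqVneq u w) => [E|?]; [rewrite ?E; clear E|].

Definition sw n (p q : 'I_n) (z : 'I_n) := if z == p then q else if z == q then p else z.

Lemma swK n (p q : 'I_n) : involutive (sw p q).
Proof.
move=> z; rewrite /sw; split2 z p; split2 z q; split2 p q; kill_neq; kill_neq; done.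
Qed.

Definition sig n (a b c f : 'I_n) (x : 'I_n) : 'I_n -> 'I_n :=
  if x == a then sw b f else if x == f then sw c a else if x == b then sw a c
  else if x == c then sw f b else id.

Definition rew n (e : rel 'I_n) a b c f : rel 'I_n := fun x z => e x (sig a b c f x z).

Lemma sigK n (a b c f x : 'I_n) : involutive (sig a b c f x).
Proof. rewrite /sig; do !case: ifP => _; try exact: swK. done. Qed.

Lemma rew_sym n (e : rel 'I_n) a b c f :
  symmetric e -> irreflexive e ->
  a != b -> a != c -> a != f -> b != c -> b != f -> c != f ->
  e a b -> e c f -> ~~ e a f -> ~~ e c b -> symmetric (rew e a b c f).
Proof.
move=> hs hi ab ac af bc bf cf eab ecf naf ncb x z; rewrite /rew /sig /sw.
split2 x a; split2 x b; split2 x c; split2 x f; split2 z a; split2 z b; split2 z c; split2 z f.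
all: kill_neq; kill_neq.
all: have E1 : e a f = false by apply: negbTE.
all: have E2 : e f a = false by rewrite hs; apply: negbTE.
all: have E3 : e c b = false by apply: negbTE.
all: have E4 : e b c = false by rewrite hs; apply: negbTE.
all: have E5 : e b a by rewrite hs.
all: have E6 : e f c by rewrite hs.
all: rewrite ?E1 ?E2 ?E3 ?E4 ?eab ?ecf ?E5 ?E6 //.
Qed.

Lemma rew_irr n (e : rel 'I_n) a b c f :
  irreflexive e ->
  a != b -> a != c -> a != f -> b != c -> b != f -> c != f ->
  irreflexive (rew e a b c f).
Proof.
move=> hi ab ac af bc bf cf x; rewrite /rew /sig /sw.
split2 x a; split2 x b; split2 x c; split2 x f.
all: kill_neq; kill_neq; exact: hi.
Qed.

Lemma rew_keep n (e : rel 'I_n) a b c f x z :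
  a != b -> a != c -> a != f -> b != c -> b != f -> c != f ->
  x != a -> x != b -> x != f -> z != f -> z != b -> rew e a b c f x z = e x z.
Proof.
move=> ab ac af bc bf cf xa xb xf zf zb; rewrite /rew /sig /sw; split2 x c; kill_neq; kill_neq; done.
Qed.

Lemma rew_bc n (e : rel 'I_n) a b c f :
  a != b -> a != c -> a != f -> b != c -> b != f -> c != f ->
  e b a -> rew e a b c f b c.
Proof.
move=> ab ac af bc bf cf h; rewrite /rew /sig /sw; kill_neq; kill_neq; done.
Qed.

Lemma rew_fa n (e : rel 'I_n) a b c f :
  a != b -> a != c -> a != f -> b != c -> b != f -> c != f ->
  e f c -> rew e a b c f f a.
Proof.
move=> ab ac af bc bf cf h; rewrite /rew /sig /sw; kill_neq; kill_neq; done.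
Qed.

Lemma rew_deg n (e : rel 'I_n) a b c f x : deg (rew e a b c f) x = deg e x.
Proof.
rewrite /deg -(card_preimset _ (can_inj (sigK a b c f x))).
by apply: eq_card => z; rewrite !inE /rew sigK.
Qed.

Lemma rew_sum n (e : rel 'I_n) a b c f x (g : 'I_n -> nat) :
  \sum_(z | rew e a b c f x z) g z = \sum_(z | e x z) g (sig a b c f x z).
Proof.
rewrite (reindex_inj (can_inj (sigK a b c f x))) /=.
by apply: eq_bigl => z; rewrite /rew sigK.
Qed.

Lemma sum_sw n (e : rel 'I_n) x p q (g : 'I_n -> nat) :
  e x p -> ~~ e x q ->
  \sum_(z | e x z) g (sw p q z) + g p = \sum_(z | e x z) g z + g q.
Proof.
move=> hp hq; rewrite (bigD1 p hp) [in RHS](bigD1 p hp) /= /sw eqxx.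
suff -> : \sum_(i | e x i && (i != p)) g (if i == p then q else if i == q then p else i) = \sum_(i | e x i && (i != p)) g i.
  by rewrite [LHS]addnAC [RHS]addnAC [g q + g p]addnC.
apply: eq_bigr => z /andP [hz zp]; rewrite (negbTE zp).
case: eqP => // zq; by rewrite -zq hz in hq.
Qed.

Lemma sig_a n (a b c f : 'I_n) : sig a b c f a = sw b f.
Proof. by rewrite /sig eqxx. Qed.
Lemma sig_f n (a b c f : 'I_n) : a != f -> sig a b c f f = sw c a.
Proof. by move=> af; rewrite /sig eqxx; kill_neq. Qed.
Lemma sig_b n (a b c f : 'I_n) : a != b -> b != f -> sig a b c f b = sw a c.
Proof. by move=> ab bf; rewrite /sig eqxx; kill_neq. Qed.
Lemma sig_c n (a b c f : 'I_n) : a != c -> b != c -> c != f -> sig a b c f c = sw f b.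
Proof. by move=> ac bc cf; rewrite /sig eqxx; kill_neq. Qed.
Lemma sig_o n (a b c f x : 'I_n) : x != a -> x != b -> x != c -> x != f -> sig a b c f x = id.
Proof. by move=> xa xb xc xf; rewrite /sig; kill_neq. Qed.

Lemma split4 n (H : 'I_n -> nat) (a b c d : 'I_n) :
  a != b -> a != c -> a != d -> b != c -> b != d -> c != d ->
  \sum_x H x = H a + (H b + (H c + (H d +
     \sum_(x | (x != a) && (x != b) && (x != c) && (x != d)) H x))).
Proof.
move=> ab ac ad bc bd cd.
rewrite (bigD1 a) //; congr (_ + _).
rewrite (bigD1 b) /=; last by rewrite eq_sym.
congr (_ + _).
rewrite (bigD1 c) /=; last by rewrite eq_sym ac eq_sym bc.
congr (_ + _).
rewrite (bigD1 d) /=; last by rewrite eq_sym ad eq_sym bd eq_sym cd.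
done.
Qed.

Lemma arith (a1 a2 a3 a4 b1 b2 b3 b4 S k : nat) : k <= 3 ->
  a1 + 3 * 4 = b1 + 3 * k -> a2 + k * 4 = b2 + k * 3 ->
  a3 + 4 * 3 = b3 + 4 * 4 -> a4 + 4 * k = b4 + 4 * 4 ->
  b1 + (b2 + (b3 + (b4 + S))) < a1 + (a2 + (a3 + (a4 + S))).
Proof. lia. Qed.

Unset Implicit Arguments.

Theorem lemma13 (n b : nat) (e : rel 'I_n) :
  1 <= b -> 2 * b + 2 < n ->
  in_CT b e ->
  (forall e' : rel 'I_n, in_CT b e' -> M2 e' <= M2 e) ->
  forall v : 'I_n, deg e v = 3 ->
    #|[set u | e v u && (deg e u == 4)]| <= 1.
Proof.
move=> hb hn hCT hmax v hv.
case: hCT => [[ht hdeg] hbr]; have ht' := ht; case: ht => [[hs hi] [hc hcard]].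
rewrite leqNgt; apply/negP => /card_gt1P [u1 [u2 [hu1 hu2 hne]]].
move: hu1 hu2; rewrite !inE => /andP [evu1 /eqP du1] /andP [evu2 /eqP du2].
case: (parent_exists (fun x => hc x v)) => par [d [hr hp]].
have hN := nbr ht' hr hp.
have u1v : u1 != v by apply/negP => /eqP E; rewrite E hi in evu1.
have u2v : u2 != v by apply/negP => /eqP E; rewrite E hi in evu2.
have pu1 : par u1 = v by move: (hN _ _ evu1); rewrite eqxx /= u1v /= => /eqP.
have pu2 : par u2 = v by move: (hN _ _ evu2); rewrite eqxx /= u2v /= => /eqP.
have iterv : forall k, iter k par v = v by elim => //= k ->.
have bound : forall z k, iter k par z = v \/ d (iter k par z) + k <= d z.
  move=> z; elim => [|k ih] /=; first by right; lia.
  case: ih => [-> | ih]; first by left.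
  case: (eqVneq (iter k par z) v) => [-> | hne']; first by left.
  have [_ h2] := hp _ hne'; right; rewrite addnS; apply: leq_trans ih; by rewrite ltn_add2r.
pose desc z a := exists k, iter k par z = a.
pose descb z a := has (fun k => iter k par z == a) (iota 0 (d z).+1).
have descbP : forall z a, a != v -> desc z a -> descb z a.
  move=> z a av [k hk]; apply/hasP; exists k; last by rewrite hk.
  rewrite mem_iota; case: (bound z k) => [E|]; first by rewrite -hk E eqxx in av.
  rewrite hk; lia.
have descP : forall z a, descb z a -> desc z a.
  by move=> z a /hasP [k _ /eqP hk]; exists k.
have dself : forall a, desc a a by move=> a; exists 0.
have dpar : forall z a, desc z a -> z != a -> desc (par z) a.
  move=> z a [[|k] hk] za; first by rewrite -hk eqxx in za.
  by exists k; rewrite -iterSr.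
have dchild : forall z a, desc (par z) a -> desc z a.
  by move=> z a [k hk]; exists k.+1; rewrite iterSr.
have disj : forall z, desc z u1 -> desc z u2 -> False.
  have gen : forall z p q, par p = v -> p != q -> q != v -> forall k j, iter k par z = p -> iter j par z = q -> k <= j -> False.
    move=> z p q pp pq qv k j hk hj kj.
    have : iter j par z = iter (j - k) par p by rewrite -hk -iterD subnK.
    rewrite hj; case E: (j - k) => [|m] /=.
      by move=> qp; rewrite qp eqxx in pq.
    rewrite -iterS iterSr pp iterv => qv'; by rewrite qv' eqxx in qv.
  move=> z [k hk] [j hj]; case: (leqP k j) => kj.
    exact: (gen z u1 u2 pu1 hne u2v k j hk hj kj).
  have hne2 : u2 != u1 by rewrite eq_sym.
  exact: (gen z u2 u1 pu2 hne2 u1v j k hj hk (ltnW kj)).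
have notv : forall z a, a != v -> desc z a -> z != v.
  move=> z a av [k hk]; apply/negP => /eqP E; rewrite E iterv in hk.
  by rewrite hk eqxx in av.
have du2b : descb u2 u2 by apply: descbP => //; exact: dself.
have [x0 hx0 dx0] : exists2 x, descb x u2 & deg e x <= 3.
  case: (@arg_maxnP _ u2 (fun z => descb z u2) d du2b) => x hx hmx; exists x => //.
  have : [set z | e x z] \subset [set par x].
    apply/subsetP => z; rewrite !inE => hxz.
    case/orP: (hN _ _ hxz) => /andP [zv /eqP pz]; first by rewrite pz.
    have dz : descb z u2.
      apply: descbP => //; apply: dchild; rewrite pz; exact: descP _ _ hx.
    have := hmx z dz; have [_ h2] := hp z zv; rewrite pz in h2; move=> h3.
    by have := leq_trans h2 h3; rewrite ltnn.
  move/subset_leq_card; rewrite cards1 /deg => h; exact: leq_trans h _.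
case: (@arg_minnP _ x0 (fun z => descb z u2 && (deg e z <= 3)) d); first by rewrite hx0 dx0.
move=> f /andP [hf1 hf2] hmin.
have df : desc f u2 := descP _ _ hf1.
have fv : f != v := notv _ _ u2v df.
have fu2 : f != u2 by apply/negP => /eqP E; rewrite E du2 in hf2.
set y := par f.
have [efy dfy] := hp f fv.
have dy : desc y u2 := dpar _ _ df fu2.
have yv : y != v := notv _ _ u2v dy.
have degy : deg e y = 4.
  have := hdeg y; case: (leqP (deg e y) 3) => h3 h4; last by apply/eqP; rewrite eqn_leq h4.
  have := hmin y; rewrite (descbP _ _ u2v dy) h3 => /(_ isT) h5.
  by have := leq_trans dfy h5; rewrite ltnn.
have ndy1 : ~ desc y u1 by move=> h; exact: disj _ h dy.
have yu1 : y != u1 by apply/negP => /eqP E; apply: ndy1; rewrite E; exact: dself.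
have fu1 : f != u1 by apply/negP => /eqP E; apply: (disj f) => //; rewrite E; exact: dself.
have yf : y != f by apply/negP => /eqP E; move: efy; rewrite -/y E hi.
have vu1 : v != u1 by rewrite eq_sym.
have vy : v != y by rewrite eq_sym.
have vf : v != f by rewrite eq_sym.
have u1y : u1 != y by rewrite eq_sym.
have u1f : u1 != f by rewrite eq_sym.
have nvf : ~~ e v f.
  apply/negP => h; move: (hN _ _ h); rewrite eqxx /= fv /= => /eqP E.
  by move: yv; rewrite /y E eqxx.
have nyu1 : ~~ e y u1.
  apply/negP => h; move: (hN _ _ h); rewrite yv u1v pu1 /= (negbTE vy) orbF => /eqP E.
  by apply: ndy1; exists 1.
have eyf : e y f by rewrite hs.
set e' := rew e v u1 y f.
have hs' : symmetric e' by apply: rew_sym.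
have hi' : irreflexive e' by apply: rew_irr.
have hdeg' : forall x, deg e' x = deg e x by move=> x; exact: rew_deg.
have eu1v : e u1 v by rewrite hs.
have efy' : e f y by [].
have e'u1y : e' u1 y by apply: rew_bc.
have e'fv : e' f v by apply: rew_fa.
have pyf : par y != f.
  apply/negP => /eqP E; have [_ h2] := hp y yv; rewrite E in h2.
  by have := ltn_trans h2 dfy; rewrite ltnn.
have pyu1 : par y != u1 by apply/negP => /eqP E; apply: ndy1; exists 1.
have hky : e' y (par y).
  rewrite /e' rew_keep //; exact: (hp y yv).1.
have hkeep : forall x, x != v -> x != u1 -> x != f -> e' x (par x).
  move=> x xv xu1 xf.
  case: (eqVneq x y) => [-> // | xy].
  rewrite /e' /rew sig_o //; exact: (hp x xv).1.
have ph1 : forall m x, d x <= m -> ~ desc x u1 -> connect e' x v.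
  elim => [|m ih] x hx nd.
    case: (eqVneq x v) => [-> // | xv]; have [_ h2] := hp x xv.
    by have := leq_trans h2 hx.
  case: (eqVneq x v) => [-> // | xv].
  case: (eqVneq x f) => [-> | xf]; first exact: connect1.
  have xu1 : x != u1 by apply/negP => /eqP E; apply: nd; rewrite E; exact: dself.
  have [_ h2] := hp x xv.
  apply: connect_trans (connect1 (hkeep x xv xu1 xf)) (ih _ _ _).
    by rewrite -ltnS; exact: leq_trans h2 hx.
  by move=> h; apply: nd; exact: dchild.
have cv : forall x, connect e' x v.
  move=> x; move: {2}(d x) (leqnn (d x)) => m; elim: m x => [|m ih] x hx.
    case: (eqVneq x v) => [-> // | xv]; have [_ h2] := hp x xv.
    by have := leq_trans h2 hx.
  case: (eqVneq x v) => [-> // | xv].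
  case: (eqVneq x f) => [-> | xf]; first exact: connect1.
  case: (eqVneq x u1) => [-> | xu1].
    exact: connect_trans (connect1 e'u1y) (ph1 _ _ (leqnn _) ndy1).
  have [_ h2] := hp x xv.
  apply: connect_trans (connect1 (hkeep x xv xu1 xf)) (ih _ _).
  by rewrite -ltnS; exact: leq_trans h2 hx.
have hct' : in_CT b e'.
  split; last by rewrite -hbr /nbranching; apply: eq_card => x; rewrite !inE hdeg'.
  split; last by move=> x; rewrite hdeg'.
  split; first by split.
  split.
    move=> p q; apply: connect_trans (cv p) _.
    by rewrite (sym_connect_sym hs'); exact: cv.
  have h1 := handshake hs' hi'; have h2 := handshake hs hi.
  have : \sum_x deg e' x = \sum_x deg e x by apply: eq_bigr => x _; exact: hdeg'.
  by rewrite h1 h2 hcard => /eqP; rewrite eqn_pmul2l // => /eqP.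
have := hmax _ hct'.
rewrite leqNgt => /negP; apply.
rewrite -(ltn_pmul2l (isT : 0 < 2)) (M2_dsum hs hi) (M2_dsum hs' hi').
set D := deg e.
pose F x := \sum_(z | e x z) D x * D (sig v u1 y f x z).
pose G x := \sum_(z | e x z) D x * D z.
have -> : \sum_x \sum_(z | e' x z) deg e' x * deg e' z = \sum_x F x.
  apply: eq_bigr => x _.
  rewrite (@rew_sum n e v u1 y f x (fun z => deg e' x * deg e' z)).
  by apply: eq_bigr => z _; rewrite !hdeg'.
have -> : \sum_x \sum_(z | e x z) deg e x * deg e z = \sum_x G x by [].
have hFv : F v + D v * D u1 = G v + D v * D f.
  by rewrite /F /G sig_a; exact: (@sum_sw n e v u1 f (fun z => D v * D z)).
have hFf : F f + D f * D y = G f + D f * D v.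
  rewrite /F /G sig_f //; apply: (@sum_sw n e f y v (fun z => D f * D z)) => //.
  by rewrite hs.
have hFu1 : F u1 + D u1 * D v = G u1 + D u1 * D y.
  rewrite /F /G sig_b //; apply: (@sum_sw n e u1 v y (fun z => D u1 * D z)) => //.
  by rewrite hs.
have hFy : F y + D y * D f = G y + D y * D u1.
  by rewrite /F /G sig_c //; apply: (@sum_sw n e y f u1 (fun z => D y * D z)).
have hrest : \sum_(x | (x != v) && (x != f) && (x != u1) && (x != y)) F x
           = \sum_(x | (x != v) && (x != f) && (x != u1) && (x != y)) G x.
  apply: eq_bigr => x /andP [/andP [/andP [xv xf] xu1] xy].
  by rewrite /F /G sig_o.
have fy : f != y by rewrite eq_sym.
rewrite (split4 F vf vu1 vy fu1 fy u1y) (split4 G vf vu1 vy fu1 fy u1y) hrest.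
move: hFv hFf hFu1 hFy; rewrite /D hv du1 degy => hFv hFf hFu1 hFy.
have := arith (\sum_(x | (x != v) && (x != f) && (x != u1) && (x != y)) G x) hf2 hFv hFf hFu1 hFy. by [].
Qed.
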